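(* There exists no function $f:\mathbb{N}\to\mathbb{N}$ such that $\chi_{\mu_2}(G\,\square\, G)\le f(\chi_{\mu_2}(G))$ holds for all graphs $G$.
   Context: The Cartesian product $G\,\square\, H$ has vertex set $V(G)\times V(H)$, with $(g,h)$ adjacent to $(g',h')$ iff either $g=g'$ and $hh'\in E(H)$, or $gg'\in E(G)$ and $h=h'$. A set $M\subseteq V(X)$ is a $2$-distance mutual-visibility set if for every two vertices $u,v\in M$ there exists a shortest $u,v$-path of length at most $2$ none of whose internal vertices lies in $M$. $\chi_{\mu_2}(X)$ is the minimum cardinality of a partition of $V(X)$ into $2$-distance mutual-visibility sets. *)

(* Defs.v *)
From mathcomp Require Import all_boot.
From mathcomp Require Import boolp.
Set Implicit Arguments. Unset Strict Implicit. Unset Printing Implicit Defensive.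

Section Defs.
Variable T : finType.

Definition simple_graph (e : rel T) := symmetric e /\ irreflexive e.

(* A u,v-walk is represented by the sequence p of vertices after u:
   u :: p is an e-path ending at v; its length is size p. *)
Definition walk (e : rel T) (u v : T) (p : seq T) : bool :=
  path e u p && (last u p == v).

Definition shortest_path (e : rel T) (u v : T) (p : seq T) : Prop :=
  walk e u v p /\ forall q, walk e u v q -> size p <= size q.

(* Internal vertices of the path u :: p (all but the two endpoints). *)
Definition internal (p : seq T) : seq T := take (size p).-1 p.

Definition dmv2 (e : rel T) (M : {set T}) : Prop :=
  forall u v, u \in M -> v \in M ->
    exists p, [/\ shortest_path e u v p, size p <= 2 &
                  forall x, x \in internal p -> x \notin M].

Definition dmv2_partition (e : rel T) (P : {set {set T}}) : Prop :=
  partition P [set: T] /\ forall B, B \in P -> dmv2 e B.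

(* chi_{mu_2}: the minimum cardinality of such a partition (the partition into
   singletons always qualifies and has #|T| blocks, so #|T| is a valid default). *)
Definition chi_mu2 (e : rel T) : nat :=
  \big[minn/#|T|]_(P : {set {set T}} | `[< dmv2_partition e P >]) #|P|.
End Defs.

Definition cart_prod (T1 T2 : finType) (e1 : rel T1) (e2 : rel T2) :
  rel (T1 * T2)%type :=
  fun x y => ((x.1 == y.1) && e2 x.2 y.2) || (e1 x.1 y.1 && (x.2 == y.2)).

(* Main.v *)
Require Import Defs.
From mathcomp Require Import all_boot.
From mathcomp Require Import boolp.
From mathcomp Require Import zify.

Set Implicit Arguments. Unset Strict Implicit. Unset Printing Implicit Defensive.

Lemma bigmin_le (I : eqType) (r : seq I) (Q : pred I) (F : I -> nat) x i :
  Q i -> i \in r -> \big[minn/x]_(j <- r | Q j) F j <= F i.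
Proof.
move=> Qi; elim: r => // j r IH; rewrite inE big_cons => /orP [/eqP <-|ir].
  by rewrite Qi geq_minl.
case: ifP => _; last exact: IH.
exact: leq_trans (geq_minr _ _) (IH ir).
Qed.

Lemma bigmin_ge (I : Type) (r : seq I) (Q : pred I) (F : I -> nat) x n :
  n <= x -> (forall i, Q i -> n <= F i) -> n <= \big[minn/x]_(j <- r | Q j) F j.
Proof.
move=> nx nF; apply: (big_ind (fun y => n <= y)) => //.
by move=> a b na nb; rewrite leq_min na nb.
Qed.

Definition star n : rel (option 'I_n) := fun x y => (x == None) != (y == None).
Arguments star : clear implicits.

Lemma star_simple n : simple_graph (star n).
Proof. split; first by move=> x y; rewrite /star eq_sym.
by move=> x; rewrite /star eqxx. Qed.

Lemma star_chi n : chi_mu2 (star n) <= 2.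
Proof.
set P := preim_partition (fun x : option 'I_n => x == None) [set: option 'I_n].
have dP : dmv2_partition (star n) P.
  split; first exact: preim_partitionP.
  move=> B /imsetP [x _ ->] u v; rewrite !inE => /eqP hu /eqP hv.
  have huv : (u == None) = (v == None) by rewrite -hu -hv.
  case: (eqVneq u v) => [<-|nuv].
    exists [::]; split => //; split => //.
    by rewrite /walk /= eqxx.
  case: u v huv hu hv nuv => [a|] [b|] //= _ hu hv nuv.
  exists [:: None; Some b]; split => //.
    split; first by rewrite /walk /= /star.
    move=> [|y [|z q]] //=.
      by rewrite /walk /= => h; move: nuv; rewrite (eqP h) eqxx.
      by rewrite /walk /= => /andP [hy /eqP eyv]; move: hy; rewrite eyv /star.
  move=> z; rewrite /internal /= inE => /eqP ->; rewrite inE hu in_setT.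
  done.
apply: leq_trans (bigmin_le _ _ _ _) _.
- by apply/asboolP; exact: dP.
- exact: mem_index_enum.
unfold P, preim_partition, equivalence_partition.
pose h := fun b : bool => [set y in [set: option 'I_n] | b == (y == None)].
rewrite (eq_imset (g := h \o (fun x => x == None))) //.
rewrite imset_comp; apply: leq_trans (leq_imset_card _ _) _.
by apply: leq_trans (max_card _) _; rewrite card_bool.
Qed.

Lemma share n (u v : option 'I_n * option 'I_n) p :
  u.1 != None -> u.2 != None -> v.1 != None -> v.2 != None ->
  walk (cart_prod (star n) (star n)) u v p -> size p <= 2 ->
  (u.1 == v.1) || (u.2 == v.2).
Proof.
case: u v => [[a|] [b|]] [[c|] [d|]] //= _ _ _ _.
case: p => [|x [|y [|? ?]]] //.
- by rewrite /walk /= => /eqP [-> _]; rewrite eqxx.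
- case: x => [[x1|] [x2|]]; rewrite /walk /= /cart_prod /star /= => H _; move: H;
    rewrite ?xpair_eqE /= ?andbF ?andbT ?orbF ?andFb //.
- case: x => [[x1|] [x2|]]; case: y => [[y1|] [y2|]]; rewrite /walk /= /cart_prod /star /= => H _; move: H;
    rewrite ?xpair_eqE /= ?andbF ?andbT ?orbF ?andFb //.
- by case/and3P => /andP [/eqP -> /eqP ->] /eqP -> _; rewrite eqxx.
- by case/and3P => /andP [/eqP -> /eqP ->] _ /eqP ->; rewrite eqxx orbT.
Qed.

Lemma cardS n (S : {set option 'I_n * option 'I_n}) :
  {in S &, forall u v, (u.1 == v.1) || (u.2 == v.2)} ->
  {in S, forall u, (u.1 != None) && (u.2 != None)} ->
  #|S| <= n.
Proof.
move=> Hs Hn.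
case: (set_0Vmem S) => [->|[s0 s0S]]; first by rewrite cards0.
case: (boolP [forall x in S, x.1 == s0.1]) => H.
  have sub : S \subset [set (s0.1, Some i) | i : 'I_n].
    apply/subsetP => [[x1 x2]] xS; apply/imsetP.
    move/forall_inP: H => /(_ _ xS) /= /eqP <-.
    case/andP: (Hn _ xS) => _; case: x2 xS => [i|] // _ _; by exists i.
  apply: leq_trans (subset_leq_card sub) _.
  by apply: leq_trans (leq_imset_card _ _) _; rewrite card_ord.
move/forall_inPn: H => [s1 s1S /= ns1].
have e12 : s1.2 == s0.2 by move: (Hs _ _ s1S s0S); rewrite (negbTE ns1).
have sub : S \subset [set (Some i, s0.2) | i : 'I_n].
  apply/subsetP => [[x1 x2]] xS; apply/imsetP.
  have -> : x2 = s0.2.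
    apply/eqP; apply/negPn/negP => nx2.
    have ex1 : x1 == s0.1 by move: (Hs _ _ xS s0S); rewrite /= (negbTE nx2) orbF.
    move: (Hs _ _ xS s1S) => /=; rewrite (eqP e12) (negbTE nx2) orbF (eqP ex1).
    by rewrite eq_sym (negbTE ns1).
  case/andP: (Hn _ xS) => /=; case: x1 xS => [i|] // _ _ _; by exists i.
apply: leq_trans (subset_leq_card sub) _.
by apply: leq_trans (leq_imset_card _ _) _; rewrite card_ord.
Qed.

Lemma card_bigcup_le (T I : finType) (A : pred I) (F : I -> {set T}) :
  #|\bigcup_(i in A) F i| <= \sum_(i in A) #|F i|.
Proof.
apply: (big_ind2 (fun (X : {set T}) m => #|X| <= m)).
- by rewrite cards0.
- move=> x1 x2 y1 y2 h1 h2; apply: leq_trans (leq_card_setU _ _) _.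
  exact: leq_add.
- by [].
Qed.

Lemma prod_lower n (P : {set {set option 'I_n * option 'I_n}}) :
  dmv2_partition (cart_prod (star n) (star n)) P -> n <= #|P|.
Proof.
case: n P => [//|n] P [/and3P [/eqP cov _ _] hB].
pose LL := [set x : option 'I_n.+1 * option 'I_n.+1 | (x.1 != None) && (x.2 != None)].
have h1 : n.+1 * n.+1 <= #|LL|.
  have -> : n.+1 * n.+1 = #|[set (Some i.1, Some i.2) | i : 'I_n.+1 * 'I_n.+1]|.
    rewrite card_imset ?card_prod ?card_ord //.
    by move=> [i j] [k l] /= [-> ->].
  apply: subset_leq_card; apply/subsetP => x /imsetP [[i j] _ ->].
  by rewrite inE.
have h2 : LL \subset \bigcup_(B in P) (B :&: LL).
  apply/subsetP => x xL.
  have : x \in cover P by rewrite cov inE.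
  case/bigcupP => B BP xB; apply/bigcupP; exists B => //.
  by rewrite inE xB xL.
have h3 : \sum_(B in P) #|B :&: LL| <= \sum_(B in P) n.+1.
  apply: leq_sum => B BP; apply: cardS.
    move=> u v; rewrite !inE => /andP [uB /andP [u1 u2]] /andP [vB /andP [v1 v2]].
    have [p [[w _] sp _]] := hB B BP u v uB vB.
    exact: share u1 u2 v1 v2 w sp.
  by move=> u; rewrite !inE => /andP [].
rewrite sum_nat_const in h3.
have : n.+1 * n.+1 <= #|P| * n.+1.
  apply: leq_trans h1 _; apply: leq_trans (subset_leq_card h2) _.
  exact: leq_trans (card_bigcup_le _ _) h3.
by rewrite leq_pmul2r.
Qed.

Theorem mainTheorem15 :
  ~ exists f : nat -> nat,
      forall (T : finType) (e : rel T), simple_graph e ->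
        chi_mu2 (cart_prod e e) <= f (chi_mu2 e).
Proof.
move=> [f Hf].
pose K := f 0 + f 1 + f 2.
have := Hf _ (star K.+1) (star_simple K.+1).
have hk : f (chi_mu2 (star K.+1)) <= K.
  have := star_chi K.+1; rewrite /K.
  case: (chi_mu2 (star K.+1)) => [|[|[|m]]] // _.
  - by rewrite -addnA leq_addr.
  - by rewrite addnAC leq_addl.
  - by rewrite leq_addl.
have hl : K.+1 <= chi_mu2 (cart_prod (star K.+1) (star K.+1)).
  apply: bigmin_ge.
    rewrite card_prod card_option card_ord; nia.
  by move=> P /asboolP; exact: prod_lower.
move=> h; have := leq_trans hl (leq_trans h hk).
by rewrite ltnn.
Qed.
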